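(* Let the data $(I,1,c,\{h_a\},S,\{d_a\},\{\chi_a\})$ be as in the context, and fix an integer $n\ge 1$. For $x,y>0$ define $$\mathcal{T}_1(n;x,y)=\frac{\chi_1\!\left(ix+\tfrac1n\right)\,\chi_1\!\left(iy-\tfrac1n\right)}{\chi_1(ix)\,\chi_1(iy)} .$$ Assume $\sum_{a\in I} d_a^2\theta_a^n\neq 0$. Then, as $x\to\infty$ and $y\to 0^+$ (independently), $\mathcal{T}_1(n;x,y)\neq 0$ for all sufficiently large $x$ and small $y$, and $$\frac{\mathcal{T}_1(n;x,y)}{|\mathcal{T}_1(n;x,y)|}\;\longrightarrow\; e^{-2\pi i\left(\frac{2}{n}+n\right)\frac{c}{24}}\;\zeta_n,\qquad \zeta_n:=\frac{\sum_{a} d_a^2\theta_a^n}{\bigl|\sum_a d_a^2\theta_a^n\bigr|}.$$ In other words, $\mathcal{T}_1(n;x,y)$ is asymptotically a positive real multiple of $e^{-2\pi i(\frac2n+n)\frac{c}{24}}\sum_a d_a^2\theta_a^n$.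
   Context: Physical interpretation (not needed for the mathematics): $\mathcal{T}_1$ models the expectation value of rotating half of a cylinder by angle $2\pi/n$, with $x=\xi_l/L$, $y=\xi_r/L$. Data: $I$ is a finite index set with a distinguished element $1$. $c\in\mathbb{R}$. Real numbers $h_a$ ($a\in I$) with $h_1=0$ and $h_a>0$ for $a\neq 1$; set $\theta_a=e^{2\pi i h_a}$. Positive reals $d_a$ ($a\in I$) and $\mathcal{D}=\sqrt{\sum_a d_a^2}$. $S=(S_{ab})_{a,b\in I}$ is a complex matrix with $S_{a1}=S_{1a}=d_a/\mathcal{D}$ for all $a$. $T$ is the diagonal matrix $T_{ab}=\delta_{ab}e^{2\pi i(h_a-c/24)}$. The functions $\chi_a$ ($a\in I$) are holomorphic on the upper half-plane $\mathbb{H}$ and have absolutely convergent expansions $\chi_a(\tau)=\sum_{k\ge 0}N_{a,k}\,e^{2\pi i\tau(h_a-c/24+k)}$ with nonnegative integers $N_{a,k}$, $N_{a,0}\ge1$ and $N_{1,0}=1$; they satisfy the modular covariance $\chi_a(-1/\tau)=\sum_b S_{ab}\chi_b(\tau)$ and $\chi_a(\tau+1)=e^{2\pi i(h_a-c/24)}\chi_a(\tau)$ for all $\tau\in\mathbb{H}$. *)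

(* Defs.v *)
From Stdlib Require Import Reals List.
From Coquelicot Require Import Coquelicot.
Open Scope R_scope.

Definition Cexp (z : C) : C :=
  (exp (Re z) * cos (Im z), exp (Re z) * sin (Im z)).

Definition e2pii (z : C) : C := Cexp (2 * PI * Ci * z)%C.

Definition CsumI (m : nat) (f : nat -> C) : C :=
  fold_right Cplus (RtoC 0) (map f (seq 0 m)).
Definition RsumI (m : nat) (f : nat -> R) : R :=
  fold_right Rplus 0 (map f (seq 0 m)).

(* T_1(n; x, y) = chi_1(ix + 1/n) chi_1(iy - 1/n) / (chi_1(ix) chi_1(iy)),
   with the vacuum label 1 encoded as index 0. *)
Definition T1 (chi1 : C -> C) (n : nat) (x y : R) : C :=
  (chi1 (Ci * RtoC x + RtoC (/ INR n)) * chi1 (Ci * RtoC y - RtoC (/ INR n))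
   / (chi1 (Ci * RtoC x) * chi1 (Ci * RtoC y)))%C.

(* Main.v *)
Require Import Defs.
From Stdlib Require Import Reals List Lra Lia.
From Coquelicot Require Import Coquelicot.
Open Scope R_scope.

Lemma e2pii_eq (z : C) : e2pii z =
  (exp (-(2*PI*Im z)) * cos (2*PI*Re z), exp (-(2*PI*Im z)) * sin (2*PI*Re z)).
Proof.
  destruct z as [a b]. unfold e2pii, Cexp. simpl.
  f_equal; f_equal; f_equal; ring.
Qed.

Lemma e2pii_plus (z w : C) : e2pii (z + w) = (e2pii z * e2pii w)%C.
Proof.
  rewrite !e2pii_eq. destruct z as [a b], w as [c d]. simpl.
  replace (-(2*PI*(b+d))) with (-(2*PI*b) + -(2*PI*d)) by ring.
  replace (2*PI*(a+c)) with (2*PI*a + 2*PI*c) by ring.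
  rewrite exp_plus, cos_plus, sin_plus.
  unfold Cmult; simpl. f_equal; ring.
Qed.

Lemma Cmod_e2pii (z : C) : Cmod (e2pii z) = exp (-(2*PI*Im z)).
Proof.
  rewrite e2pii_eq. unfold Cmod. cbn [fst snd].
  set (E := exp _). set (t := 2*PI*Re z).
  replace ((E * cos t) ^ 2 + (E * sin t) ^ 2) with (E*E) .
  - apply sqrt_square. unfold E; left; apply exp_pos.
  - pose proof (sin2_cos2 t) as H. unfold Rsqr in H. transitivity (E*E*(sin t * sin t + cos t * cos t)). rewrite H; ring. ring.
Qed.

Lemma e2pii_neq0 (z : C) : e2pii z <> RtoC 0.
Proof.
  intro H. assert (Cmod (e2pii z) = 0) by (rewrite H; apply Cmod_0).
  rewrite Cmod_e2pii in H0. pose proof (exp_pos (-(2*PI*Im z))). lra.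
Qed.

Lemma e2pii_imag (t : R) : e2pii (Ci * RtoC t) = RtoC (exp (-(2*PI*t))).
Proof.
  rewrite e2pii_eq. simpl. unfold RtoC. f_equal.
  - replace (2*PI*(0*t - 1*0)) with 0 by ring. rewrite cos_0. replace (0*0+1*t) with t by ring. ring.
  - replace (2*PI*(0*t - 1*0)) with 0 by ring. rewrite sin_0. ring.
Qed.

Lemma e2pii_0 : e2pii (RtoC 0) = RtoC 1.
Proof.
  rewrite e2pii_eq. simpl. replace (2*PI*0) with 0 by ring.
  replace (-0) with 0 by ring. rewrite exp_0, cos_0, sin_0. unfold RtoC. f_equal; ring.
Qed.

Lemma series_norm_le (a : nat -> C) (b : nat -> R) (l : C) (L : R) :
  is_series a l -> is_series b L -> (forall k, Cmod (a k) <= b k) -> Cmod l <= L.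
Proof.
  intros Ha Hb Hab.
  assert (Hp : forall n, Cmod (sum_n a n) <= sum_n b n).
  { intro n. unfold sum_n. eapply Rle_trans. apply (norm_sum_n_m a 0 n).
    apply sum_n_m_le. intro k. apply Hab. }
  assert (H1 : is_lim_seq (fun n => Cmod (sum_n a n)) (Cmod l)).
  { unfold is_lim_seq. eapply filterlim_comp. apply Ha. apply (filterlim_norm (K:=C_AbsRing) (V:=C_NormedModule)). }
  assert (H2 : is_lim_seq (sum_n b) L) by exact Hb.
  pose proof (is_lim_seq_le _ _ _ _ Hp H1 H2). simpl in H. exact H.
Qed.

Lemma Im_mult_RtoC (z : C) (r : R) : Im (z * RtoC r) = Im z * r.
Proof. destruct z; simpl; ring. Qed.

Definition TT (NN : nat -> nat) (hh c : R) (tau : C) (k : nat) : C :=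
  (RtoC (INR (NN k)) * e2pii (tau * RtoC (hh - c / 24 + INR k)))%C.

Lemma term_eq (NN : nat -> nat) (hh c : R) (k : nat) (s : C) :
  Cmod (e2pii (s * RtoC (c/24)) * TT NN hh c s k)%C =
  Cmod (TT NN hh c Ci k) * exp (-(2*PI*(c/24))) * exp (-(2*PI*((Im s - 1)*(hh + INR k)))).
Proof.
  unfold TT. rewrite !Cmod_mult, !Cmod_e2pii, !Cmod_R, !Im_mult_RtoC.
  rewrite Rabs_pos_eq by apply pos_INR. simpl (Im Ci).
  set (N := INR (NN k)).
  transitivity (N * (exp (- (2 * PI * (Im s * (c / 24)))) * exp (- (2 * PI * (Im s * (hh - c / 24 + INR k)))))); [ring|].
  transitivity (N * (exp (- (2 * PI * (1 * (hh - c / 24 + INR k)))) * exp (- (2 * PI * (c / 24))) *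
     exp (- (2 * PI * ((Im s - 1) * (hh + INR k)))))); [|ring].
  f_equal. rewrite <- !exp_plus. f_equal. ring.
Qed.

Lemma tends_of_bound (G : C -> C) (dl : C) (K e0 : R) (He0 : 0 < e0)
  (HB : forall s, 1 <= Im s -> Cmod (G s - dl)%C <= K * exp (-(2*PI*((Im s - 1)*e0))))
  {T : Type} (F : (T -> Prop) -> Prop) (FF : Filter F) (sg : T -> C)
  (Hs : forall M, F (fun t => M < Im (sg t))) :
  filterlim (fun t => G (sg t)) F (locally dl).
Proof.
  apply (proj2 (filterlim_locally_ball_norm (K:=C_AbsRing) (U:=C_NormedModule) _ _)). intro eps.
  pose (M := 1 + Rabs K / (2*PI*e0*eps)).
  assert (HPI := PI_RGT_0). pose proof (cond_pos eps) as He.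
  assert (Hden : 0 < 2*PI*e0*eps).
  { assert (0 < PI*e0) by (apply Rmult_lt_0_compat; lra).
    assert (0 < PI*e0*eps) by (apply Rmult_lt_0_compat; lra). nra. }
  assert (HM : 1 <= M). { unfold M. assert (0 <= Rabs K / (2*PI*e0*eps)).
     apply Rmult_le_pos; [apply Rabs_pos|left; apply Rinv_0_lt_compat; lra]. lra. }
  eapply filter_imp; [|apply (Hs M)]. intros t Ht. simpl in Ht.
  unfold ball_norm. change (Cmod (G (sg t) - dl)%C < eps).
  eapply Rle_lt_trans. apply HB. lra.
  set (x := 2*PI*((Im (sg t) - 1)*e0)).
  assert (Hx : Rabs K / (2*PI*e0*eps) * (2*PI*e0) < x).
  { unfold x. replace (2*PI*((Im (sg t) - 1)*e0)) with ((Im (sg t) - 1)*(2*PI*e0)) by ring.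
    apply Rmult_lt_compat_r. nra. unfold M in Ht. lra. }
  assert (Hx2 : Rabs K < eps * x).
  { replace (Rabs K) with (Rabs K / (2*PI*e0*eps) * (2*PI*e0) * eps) by (field; lra).
    rewrite Rmult_comm. apply Rmult_lt_compat_l; lra. }
  assert (Hx0 : 0 < x). { pose proof (Rabs_pos K). nra. }
  pose proof (exp_ineq1 x ltac:(lra)).
  rewrite exp_Ropp. apply (Rle_lt_trans _ (Rabs K * / exp x)).
  apply Rmult_le_compat_r. left; apply Rinv_0_lt_compat, exp_pos. apply Rle_abs.
  apply (Rmult_lt_reg_r (exp x)). apply exp_pos.
  rewrite Rmult_assoc, Rinv_l by (apply Rgt_not_eq, exp_pos). nra.
Qed.

Lemma exp_le' (x y : R) : x <= y -> exp x <= exp y.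
Proof. intros [H|H]. left; apply exp_increasing; auto. subst; lra. Qed.

Lemma TT_series (NN : nat -> nat) (hh c : R) (ch : C -> C)
  (Hser : forall tau, 0 < Im tau -> is_series (TT NN hh c tau) (ch tau) /\
            ex_series (fun k => Cmod (TT NN hh c tau k))) (s : C) (Hs : 0 < Im s) :
  is_series (fun k => e2pii (s * RtoC (c/24)) * TT NN hh c s k)%C
            (e2pii (s * RtoC (c/24)) * ch s)%C.
Proof.
  apply (is_series_scal_l (K:=C_AbsRing) (V:=C_NormedModule)). apply Hser; auto.
Qed.

Lemma bound_pos (NN : nat -> nat) (hh c : R) (ch : C -> C) (Hh : 0 < hh)
  (Hser : forall tau, 0 < Im tau -> is_series (TT NN hh c tau) (ch tau) /\
            ex_series (fun k => Cmod (TT NN hh c tau k))) :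
  exists K, forall s, 1 <= Im s ->
    Cmod (ch s * e2pii (s * RtoC (c/24)) - RtoC 0)%C <= K * exp (-(2*PI*((Im s - 1)*hh))).
Proof.
  assert (HCi : 0 < Im Ci) by (simpl; lra).
  destruct (Hser Ci HCi) as [_ Hex].
  exists (Series (fun k => Cmod (TT NN hh c Ci k)) * exp (-(2*PI*(c/24)))).
  intros s Hs.
  replace (ch s * e2pii (s * RtoC (c/24)) - RtoC 0)%C with (e2pii (s * RtoC (c/24)) * ch s)%C by ring.
  eapply series_norm_le.
  - apply TT_series; auto; lra.
  - apply is_series_scal_r. apply is_series_scal_r. apply Series_correct. exact Hex.
  - intro k. cbv beta. rewrite (term_eq NN hh c k s). apply Rmult_le_compat_l.
    + apply Rmult_le_pos. apply Cmod_ge_0. left; apply exp_pos.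
    + apply exp_le'. pose proof (pos_INR k). pose proof PI_RGT_0.
      assert (0 <= (Im s - 1) * INR k) by (apply Rmult_le_pos; lra). nra.
Qed.

Lemma bound_zero (NN : nat -> nat) (c : R) (ch : C -> C) (HN : NN 0%nat = 1%nat)
  (Hser : forall tau, 0 < Im tau -> is_series (TT NN 0 c tau) (ch tau) /\
            ex_series (fun k => Cmod (TT NN 0 c tau k))) :
  exists K, forall s, 1 <= Im s ->
    Cmod (ch s * e2pii (s * RtoC (c/24)) - RtoC 1)%C <= K * exp (-(2*PI*((Im s - 1)*1))).
Proof.
  assert (HCi : 0 < Im Ci) by (simpl; lra).
  destruct (Hser Ci HCi) as [_ Hex].
  apply ex_series_incr_1 in Hex.
  exists (Series (fun k => Cmod (TT NN 0 c Ci (S k))) * exp (-(2*PI*(c/24)))).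
  intros s Hs.
  replace (ch s * e2pii (s * RtoC (c/24)) - RtoC 1)%C with (e2pii (s * RtoC (c/24)) * ch s - RtoC 1)%C by ring.
  eapply series_norm_le.
  - apply (is_series_incr_1 (K:=C_AbsRing) (V:=C_NormedModule)
       (fun k => e2pii (s * RtoC (c/24)) * TT NN 0 c s k)%C).
    assert (E : (e2pii (s * RtoC (c / 24)) * TT NN 0 c s 0)%C = RtoC 1).
    { unfold TT. rewrite HN. simpl INR.
      replace (e2pii (s * RtoC (c / 24)) * (RtoC 1 * e2pii (s * RtoC (0 - c / 24 + 0))))%C
        with (e2pii (s * RtoC (c / 24)) * e2pii (s * RtoC (0 - c / 24 + 0)))%C by ring.
      rewrite <- e2pii_plus. rewrite <- e2pii_0. f_equal.
      destruct s as [a b]. unfold RtoC, Cmult, Cplus; simpl. f_equal; field. }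
    rewrite E. change (plus (e2pii (s * RtoC (c / 24)) * ch s - RtoC 1)%C (RtoC 1)) with
      ((e2pii (s * RtoC (c / 24)) * ch s - RtoC 1) + RtoC 1)%C.
    replace ((e2pii (s * RtoC (c / 24)) * ch s - RtoC 1) + RtoC 1)%C with (e2pii (s * RtoC (c / 24)) * ch s)%C by ring.
    apply TT_series; auto; lra.
  - apply is_series_scal_r. apply is_series_scal_r. apply Series_correct. exact Hex.
  - intro k. simpl. rewrite term_eq. apply Rmult_le_compat_l.
    + apply Rmult_le_pos. apply Cmod_ge_0. left; apply exp_pos.
    + apply exp_le'. rewrite S_INR. pose proof (pos_INR k). pose proof PI_RGT_0.
      assert (0 <= (Im s - 1) * INR k) by (apply Rmult_le_pos; lra). nra.
Qed.

Section Lims.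
Context {T : Type} (F : (T -> Prop) -> Prop) {FF : Filter F}.

Lemma lim_ball (f : T -> C) (l : C) :
  filterlim f F (locally l) <-> (forall eps : posreal, F (fun t => Cmod (f t - l)%C < eps)).
Proof.
  split; intro H.
  - intro eps. apply (proj1 (filterlim_locally_ball_norm (K:=C_AbsRing) (U:=C_NormedModule) f l) H eps).
  - apply (proj2 (filterlim_locally_ball_norm (K:=C_AbsRing) (U:=C_NormedModule) f l)). exact H.
Qed.

Lemma lim_plus (f g : T -> C) (a b : C) :
  filterlim f F (locally a) -> filterlim g F (locally b) ->
  filterlim (fun t => f t + g t)%C F (locally (a + b)%C).
Proof.
  intros Hf Hg. eapply (filterlim_comp_2 (F:=F) f g (fun u v => Cplus u v)); eauto.
  apply (filterlim_plus (K:=C_AbsRing) (V:=C_NormedModule)).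
Qed.

Lemma lim_mult (f g : T -> C) (a b : C) :
  filterlim f F (locally a) -> filterlim g F (locally b) ->
  filterlim (fun t => f t * g t)%C F (locally (a * b)%C).
Proof.
  intros Hf Hg. apply lim_ball. intro eps. pose proof (cond_pos eps) as He.
  set (K := 1 + Cmod a + Cmod b).
  assert (HK : 1 <= K) by (pose proof (Cmod_ge_0 a); pose proof (Cmod_ge_0 b); unfold K; lra).
  assert (Hp : 0 < Rmin 1 (eps / K)).
  { apply Rmin_pos. lra. apply Rdiv_lt_0_compat; lra. }
  eapply filter_imp; [|apply filter_and; [apply (proj1 (lim_ball f a) Hf (mkposreal _ Hp))|apply (proj1 (lim_ball g b) Hg (mkposreal _ Hp))]].
  intros t [H1 H2]. simpl in H1, H2.
  set (dl := Rmin 1 (eps / K)) in *.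
  assert (Hd1 : dl <= 1) by apply Rmin_l. assert (Hd2 : dl <= eps / K) by apply Rmin_r.
  replace (f t * g t - a * b)%C with ((f t - a) * (g t - b) + a * (g t - b) + (f t - a) * b)%C by ring.
  eapply Rle_lt_trans. eapply Rle_trans. apply Cmod_triangle.
  apply Rplus_le_compat_r. apply Cmod_triangle.
  rewrite !Cmod_mult.
  pose proof (Cmod_ge_0 (f t - a)%C). pose proof (Cmod_ge_0 (g t - b)%C).
  pose proof (Cmod_ge_0 a). pose proof (Cmod_ge_0 b).
  assert (Cmod (f t - a)%C * Cmod (g t - b)%C <= dl * 1) by (apply Rmult_le_compat; lra).
  assert (Cmod a * Cmod (g t - b)%C <= Cmod a * dl) by (apply Rmult_le_compat_l; lra).
  assert (Cmod (f t - a)%C * Cmod b <= dl * Cmod b) by (apply Rmult_le_compat_r; lra).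
  assert (dl * K <= eps).
  { apply (Rmult_le_reg_r (/K)). apply Rinv_0_lt_compat; lra.
    rewrite Rmult_assoc, Rinv_r by lra. rewrite Rmult_1_r. exact Hd2. }
  assert (dl * K < eps \/ dl * K = eps) by lra.
  unfold K in *. destruct H8.
  - nra.
  - assert (dl * 1 < dl*1 + 0 \/ Cmod (f t - a)%C * Cmod (g t - b)%C < dl * 1 \/ True) by (right; right; exact I).
    assert (Cmod (f t - a)%C * Cmod (g t - b)%C < dl * 1).
    { apply (Rle_lt_trans _ (Cmod (f t - a)%C * 1)). apply Rmult_le_compat_l; lra. lra. }
    nra.
Qed.

Lemma lim_neq0 (f : T -> C) (l : C) : filterlim f F (locally l) -> l <> RtoC 0 ->
  F (fun t => f t <> RtoC 0).
Proof.
  intros Hf Hl. apply Cmod_gt_0 in Hl.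
  assert (Hp : 0 < Cmod l / 2) by lra.
  eapply filter_imp; [|apply (proj1 (lim_ball f l) Hf (mkposreal _ Hp))].
  intros t Ht Habs. simpl in Ht. rewrite Habs in Ht.
  replace (RtoC 0 - l)%C with (- l)%C in Ht by ring. rewrite Cmod_opp in Ht. lra.
Qed.

Lemma lim_inv (f : T -> C) (l : C) : filterlim f F (locally l) -> l <> RtoC 0 ->
  filterlim (fun t => / f t)%C F (locally (/ l)%C).
Proof.
  intros Hf Hl. apply lim_ball. intro eps. pose proof (cond_pos eps) as He.
  pose proof Hl as Hl'. apply Cmod_gt_0 in Hl'. set (r := Cmod l) in *.
  assert (Hp : 0 < Rmin (r/2) (eps*r*r/2)).
  { apply Rmin_pos. lra. assert (0 < eps * r) by (apply Rmult_lt_0_compat; lra).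
    assert (0 < eps * r * r) by (apply Rmult_lt_0_compat; lra). lra. }
  eapply filter_imp; [|apply (proj1 (lim_ball f l) Hf (mkposreal _ Hp))].
  intros t Ht. simpl in Ht.
  assert (H1 : Cmod (f t - l)%C < r/2) by (eapply Rlt_le_trans; [apply Ht|apply Rmin_l]).
  assert (H2 : Cmod (f t - l)%C < eps*r*r/2) by (eapply Rlt_le_trans; [apply Ht|apply Rmin_r]).
  assert (H3 : r/2 < Cmod (f t)).
  { pose proof (Cmod_triangle (f t) (l - f t)%C).
    replace (f t + (l - f t))%C with l in H by ring.
    replace (l - f t)%C with (- (f t - l))%C in H by ring. rewrite Cmod_opp in H.
    fold r in H. lra. }
  assert (Hft : f t <> RtoC 0). { intro E. rewrite E, Cmod_0 in H3. lra. }
  replace (/ f t - / l)%C with (- (f t - l) / (f t * l))%C by (field; auto).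
  rewrite Cmod_div by (apply Cmod_gt_0; rewrite Cmod_mult; fold r; apply Rmult_lt_0_compat; lra).
  rewrite Cmod_opp, Cmod_mult. fold r.
  apply (Rmult_lt_reg_r (Cmod (f t) * r)). apply Rmult_lt_0_compat; lra.
  unfold Rdiv. rewrite Rmult_assoc, Rinv_l, Rmult_1_r.
  2: apply Rgt_not_eq, Rmult_lt_0_compat; lra.
  assert (eps * (r/2) * r < eps * Cmod (f t) * r).
  { apply Rmult_lt_compat_r. lra. apply Rmult_lt_compat_l; lra. }
  lra.
Qed.

Lemma lim_Cmod (f : T -> C) (l : C) : filterlim f F (locally l) ->
  filterlim (fun t => Cmod (f t)) F (locally (Cmod l)).
Proof.
  intro Hf. eapply filterlim_comp. apply Hf.
  apply (filterlim_norm (K:=C_AbsRing) (V:=C_NormedModule)).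
Qed.

Lemma lim_RtoC (f : T -> R) (l : R) : filterlim f F (locally l) ->
  filterlim (fun t => RtoC (f t)) F (locally (RtoC l)).
Proof.
  intro Hf. apply lim_ball. intro eps.
  pose proof (proj1 (filterlim_locally_ball_norm (K:=R_AbsRing) (U:=R_NormedModule) f l) Hf eps).
  eapply filter_imp; [|apply H]. intros t Ht. unfold ball_norm in Ht.
  rewrite RtoC_minus in Ht || idtac.
  replace (RtoC (f t) - RtoC l)%C with (RtoC (f t - l)) by (rewrite RtoC_minus; reflexivity).
  rewrite Cmod_R. exact Ht.
Qed.

End Lims.

Definition fsum (l : list nat) (f : nat -> C) : C := fold_right Cplus (RtoC 0) (map f l).

Lemma CsumI_fsum m f : CsumI m f = fsum (seq 0 m) f.
Proof. reflexivity. Qed.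

Lemma fsum_ext l f g : (forall b, In b l -> f b = g b) -> fsum l f = fsum l g.
Proof.
  induction l as [|x l IH]; intros H; simpl; auto.
  unfold fsum in *; simpl. rewrite H by (left; auto). f_equal. apply IH. intros; apply H; right; auto.
Qed.

Lemma fsum_scal l k f : fsum l (fun b => k * f b)%C = (k * fsum l f)%C.
Proof.
  induction l as [|x l IH]; unfold fsum in *; simpl. ring. rewrite IH. ring.
Qed.

Lemma fsum_zero l f : (forall b, In b l -> f b = RtoC 0) -> fsum l f = RtoC 0.
Proof.
  induction l as [|x l IH]; intros H; unfold fsum in *; simpl; auto.
  rewrite H by (left; auto). rewrite IH by (intros; apply H; right; auto). ring.
Qed.

Lemma fsum_lim {T : Type} (F : (T -> Prop) -> Prop) {FF : Filter F} l (f : nat -> T -> C) (L : nat -> C) :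
  (forall b, In b l -> filterlim (f b) F (locally (L b))) ->
  filterlim (fun t => fsum l (fun b => f b t)) F (locally (fsum l L)).
Proof.
  induction l as [|x l IH]; intros H; unfold fsum in *; simpl.
  - apply filterlim_const.
  - apply (lim_plus F). apply H; left; auto. apply IH. intros; apply H; right; auto.
Qed.

Definition delta (c : nat) : C := if Nat.eqb c 0 then RtoC 1 else RtoC 0.

Lemma fsum_delta m (S : nat -> C) : (0 < m)%nat ->
  fsum (seq 0 m) (fun c => S c * delta c)%C = S 0%nat.
Proof.
  intro Hm. destruct m as [|m]; [lia|]. simpl. unfold fsum; simpl.
  fold (fsum (seq 1 m) (fun c => S c * delta c)%C).
  rewrite fsum_zero. unfold delta; simpl; ring.
  intros b Hb. apply in_seq in Hb. unfold delta. destruct (Nat.eqb_spec b 0). lia. ring.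
Qed.

Lemma Rsum_pos m (d : nat -> R) : (0 < m)%nat -> (forall a, (a < m)%nat -> 0 < d a) ->
  0 < RsumI m (fun b => d b ^ 2).
Proof.
  intros Hm Hd. unfold RsumI.
  assert (G : forall s k, (s + k <= m)%nat -> 0 <= fold_right Rplus 0 (map (fun b => d b ^ 2) (seq s k))).
  { intros s k. revert s. induction k; intros s Hsk; cbn [seq map fold_right]. lra.
    pose proof (pow2_ge_0 (d s)). pose proof (IHk (S s) ltac:(lia)). lra. }
  destruct m as [|m]; [lia|]. cbn [seq map fold_right].
  pose proof (G 1%nat m ltac:(lia)). pose proof (Hd 0%nat Hm).
  assert (0 < d 0%nat ^ 2) by (apply pow_lt; auto). lra.
Qed.

Lemma RtoC0_neq (x : R) : x <> 0 -> RtoC x <> RtoC 0.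
Proof. intros H E. apply H. injection E. auto. Qed.

Lemma Cpow_e2pii z k : Cpow (e2pii z) k = e2pii (z * RtoC (INR k)).
Proof.
  induction k as [|k IH].
  - simpl. replace (z * RtoC 0)%C with (RtoC 0). rewrite e2pii_0. reflexivity.
    destruct z; unfold Cmult, RtoC; simpl; f_equal; ring.
  - simpl Cpow. rewrite IH, <- e2pii_plus. f_equal. rewrite S_INR.
    destruct z; unfold Cmult, Cplus, RtoC; simpl; f_equal; ring.
Qed.

Lemma Im_oppinv z : 0 < Im z -> 0 < Im (- / z)%C.
Proof.
  destruct z as [a b]. simpl. intro Hb.
  assert (0 < a*a + b*b) by nra.
  replace (- (- b / (a * (a * 1) + b * (b * 1)))) with (b / (a*a+b*b)) by (field; lra).
  apply Rdiv_lt_0_compat; lra.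
Qed.

Lemma normalize_scale (Z : C) (k : R) : 0 < k -> Z <> RtoC 0 ->
  ((Z * RtoC k) / RtoC (Cmod (Z * RtoC k)))%C = (Z / RtoC (Cmod Z))%C.
Proof.
  intros Hk HZ. rewrite Cmod_mult, Cmod_R, Rabs_pos_eq by lra.
  rewrite RtoC_mult. assert (HZ' : 0 < Cmod Z) by (apply Cmod_gt_0; auto).
  field. split; apply RtoC0_neq; lra.
Qed.

Lemma far_p_infty (r : R) M : Rbar_locally p_infty (fun x => M < Im (Ci * RtoC x + RtoC r)%C).
Proof. exists M. intros x Hx. simpl. lra. Qed.

Lemma far_p_infty' M : Rbar_locally p_infty (fun x => M < Im (Ci * RtoC x)%C).
Proof. exists M. intros x Hx. simpl. lra. Qed.

Lemma pos_p_infty : Rbar_locally p_infty (fun x => 0 < x).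
Proof. exists 0. intros; auto. Qed.

Lemma pos_at_right : at_right 0 (fun y => 0 < y).
Proof. exists (mkposreal 1 Rlt_0_1). intros y _ Hy. exact Hy. Qed.

Lemma inv_at_right (k : R) (Hk : 0 < k) M : at_right 0 (fun y => M < / (k * y)).
Proof.
  assert (He : 0 < / (k * (Rabs M + 1))).
  { apply Rinv_0_lt_compat. apply Rmult_lt_0_compat. lra. pose proof (Rabs_pos M). lra. }
  exists (mkposreal _ He). intros y0 Hy0' Hy0''. simpl in Hy0'.
  unfold ball in Hy0'; simpl in Hy0'. unfold AbsRing_ball in Hy0'. simpl in Hy0'.
  unfold abs, minus, plus, opp in Hy0'; simpl in Hy0'.
  revert Hy0' Hy0''. generalize (y0 : R). clear y0. intros y Hy Hy0.
  replace (y + - 0) with y in Hy by ring. rewrite Rabs_pos_eq in Hy by lra.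
  pose proof (Rle_abs M). pose proof (Rabs_pos M).
  assert (0 < k * y) by (apply Rmult_lt_0_compat; lra).
  assert (k * y < / (Rabs M + 1)).
  { apply (Rmult_lt_reg_l (/k)). apply Rinv_0_lt_compat; lra.
    replace (/ k * (k * y)) with y by (field; lra).
    rewrite <- Rinv_mult. exact Hy. }
  apply Rinv_lt_contravar in H2. rewrite Rinv_inv in H2. lra.
  apply Rmult_lt_0_compat; auto. apply Rinv_0_lt_compat; lra.
Qed.

Ltac ceq := unfold Cminus, Cdiv, Cplus, Cmult, Copp, Cinv, RtoC, Ci; simpl; f_equal.

Lemma E1 (nr y : R) : 0 < nr -> 0 < y ->
  (- / (RtoC (/ nr) + Ci * RtoC (/ (nr * nr * y))) + RtoC nr)%C = (- / (Ci * RtoC y - RtoC (/ nr)))%C.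
Proof.
  intros Hn Hy. assert (0 < y*y*(nr*nr)) by (apply Rmult_lt_0_compat; apply Rmult_lt_0_compat; lra).
  ceq; field; repeat split; lra.
Qed.

Lemma E2 (y : R) : 0 < y -> (Ci * RtoC y)%C = (- / (Ci * RtoC (/ y)))%C.
Proof. intros Hy. ceq; field; lra. Qed.

Lemma oppinv_inv (z : C) : z <> RtoC 0 -> (- / (- / z))%C = z.
Proof. intro H. field. auto. Qed.

Lemma Cmult_neq0 (a b : C) : a <> RtoC 0 -> b <> RtoC 0 -> (a * b)%C <> RtoC 0.
Proof.
  intros Ha Hb. apply Cmod_gt_0 in Ha. apply Cmod_gt_0 in Hb. apply Cmod_gt_0.
  rewrite Cmod_mult. apply Rmult_lt_0_compat; auto.
Qed.

Lemma Im_pos_neq0 (z : C) : 0 < Im z -> z <> RtoC 0.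
Proof. intros H E. rewrite E in H. simpl in H. lra. Qed.

Lemma chi_shift (chi : nat -> C -> C) (h : nat -> R) (c : R) (m : nat)
  (HmodT : forall a (tau : C), (a < m)%nat -> 0 < Im tau ->
          chi a (tau + RtoC 1)%C = (e2pii (RtoC (h a - c / 24)) * chi a tau)%C)
  a tau0 : (a < m)%nat -> 0 < Im tau0 -> forall k,
  chi a (tau0 + RtoC (INR k))%C = (Cpow (e2pii (RtoC (h a - c / 24))) k * chi a tau0)%C.
Proof.
  intros Ha Ht k. induction k as [|k IH].
  - simpl. replace (tau0 + RtoC 0)%C with tau0 by (destruct tau0; ceq; ring). ring.
  - rewrite S_INR.
    replace (tau0 + RtoC (INR k + 1))%C with ((tau0 + RtoC (INR k)) + RtoC 1)%C
      by (destruct tau0; ceq; ring).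
    rewrite HmodT; auto. rewrite IH. simpl Cpow. ring.
    destruct tau0; simpl in *; lra.
Qed.

Theorem mainTheorem1
  (m : nat)
  (c : R) (h : nat -> R) (d : nat -> R) (S : nat -> nat -> C)
  (chi : nat -> C -> C) (N : nat -> nat -> nat) (n : nat)
  (Hm : (0 < m)%nat)
  (Hh0 : h 0%nat = 0)
  (Hhpos : forall a, (0 < a < m)%nat -> 0 < h a)
  (Hdpos : forall a, (a < m)%nat -> 0 < d a)
  (HS : forall a, (a < m)%nat ->
          S a 0%nat = RtoC (d a / sqrt (RsumI m (fun b => d b ^ 2))) /\
          S 0%nat a = RtoC (d a / sqrt (RsumI m (fun b => d b ^ 2))))
  (Hholo : forall a (tau : C), (a < m)%nat -> 0 < Im tau ->
          ex_derive (K := C_AbsRing) (V := C_NormedModule) (chi a) tau)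
  (Hser : forall a (tau : C), (a < m)%nat -> 0 < Im tau ->
          is_series (fun k => (RtoC (INR (N a k)) *
                       e2pii (tau * RtoC (h a - c / 24 + INR k)))%C) (chi a tau) /\
          ex_series (fun k => Cmod (RtoC (INR (N a k)) *
                       e2pii (tau * RtoC (h a - c / 24 + INR k)))%C))
  (HN0 : forall a, (a < m)%nat -> (1 <= N a 0%nat)%nat)
  (HN00 : N 0%nat 0%nat = 1%nat)
  (HmodS : forall a (tau : C), (a < m)%nat -> 0 < Im tau ->
          chi a (Copp (Cinv tau)) = CsumI m (fun b => S a b * chi b tau)%C)
  (HmodT : forall a (tau : C), (a < m)%nat -> 0 < Im tau ->
          chi a (tau + RtoC 1)%C = (e2pii (RtoC (h a - c / 24)) * chi a tau)%C)
  (Hn : (1 <= n)%nat)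
  (Hsum : CsumI m (fun a => RtoC (d a ^ 2) * Cpow (e2pii (RtoC (h a))) n)%C <> RtoC 0) :
  let Z := CsumI m (fun a => RtoC (d a ^ 2) * Cpow (e2pii (RtoC (h a))) n)%C in
  filter_prod (Rbar_locally p_infty) (at_right 0)
    (fun p => T1 (chi 0%nat) n (fst p) (snd p) <> RtoC 0) /\
  filterlim (fun p => (T1 (chi 0%nat) n (fst p) (snd p) /
                       RtoC (Cmod (T1 (chi 0%nat) n (fst p) (snd p))))%C)
    (filter_prod (Rbar_locally p_infty) (at_right 0))
    (locally (e2pii (RtoC (- (2 / INR n + INR n) * (c / 24))) * (Z / RtoC (Cmod Z)))%C).
Proof.
  intros Z.
  assert (Hnr : 0 < INR n) by (apply lt_0_INR; lia).
  assert (HRs : 0 < RsumI m (fun b => d b ^ 2)) by (apply Rsum_pos; auto).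
  set (sD := sqrt (RsumI m (fun b => d b ^ 2))) in *.
  assert (HsD : 0 < sD) by (apply sqrt_lt_R0; auto).
  assert (Hin : forall b, In b (seq 0 m) -> (b < m)%nat) by (intros b Hb; apply in_seq in Hb; lia).
  pose (g := fun a s => (chi a s * e2pii (s * RtoC (c/24)))%C).
  assert (Hg : forall a, (a < m)%nat -> forall (T : Type) (F : (T -> Prop) -> Prop), Filter F ->
     forall sg : T -> C, (forall M, F (fun t => M < Im (sg t))) ->
     filterlim (fun t => g a (sg t)) F (locally (delta a))).
  { intros a Ha T F FF sg Hs. destruct a as [|a].
    - assert (Hs0 : forall tau, 0 < Im tau -> is_series (TT (N 0%nat) 0 c tau) (chi 0%nat tau) /\
                ex_series (fun k => Cmod (TT (N 0%nat) 0 c tau k))).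
      { intros tau Ht. replace (TT (N 0%nat) 0 c) with (TT (N 0%nat) (h 0%nat) c) by (rewrite Hh0; reflexivity).
        exact (Hser 0%nat tau Ha Ht). }
      destruct (bound_zero (N 0%nat) c (chi 0%nat) HN00 Hs0) as [K HK].
      exact (tends_of_bound (fun s => chi 0%nat s * e2pii (s * RtoC (c/24)))%C (RtoC 1) K 1 Rlt_0_1 HK F FF sg Hs).
    - destruct (bound_pos (N (Datatypes.S a)) (h (Datatypes.S a)) c (chi (Datatypes.S a)) (Hhpos (Datatypes.S a) ltac:(lia))
         (fun tau Ht => Hser (Datatypes.S a) tau Ha Ht)) as [K HK].
      exact (tends_of_bound (fun s => chi (Datatypes.S a) s * e2pii (s * RtoC (c/24)))%C (RtoC 0) K (h (Datatypes.S a))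
         (Hhpos (Datatypes.S a) ltac:(lia)) HK F FF sg Hs). }
  assert (Hsplit : forall a s, chi a s = (g a s * e2pii (s * RtoC (- (c/24))))%C).
  { intros a s. unfold g.
    transitivity (chi a s * (e2pii (s * RtoC (c/24)) * e2pii (s * RtoC (- (c/24)))))%C; [|ring].
    rewrite <- e2pii_plus. replace (s * RtoC (c/24) + s * RtoC (- (c/24)))%C with (RtoC 0)
      by (destruct s; ceq; ring). rewrite e2pii_0. ring. }
  pose (sg := fun y => (RtoC (/ INR n) + Ci * RtoC (/ (INR n * INR n * y)))%C).
  pose (wy := fun y => (Ci * RtoC (/ y))%C).
  pose (A := fun y => CsumI m (fun b => S 0%nat b * Cpow (e2pii (RtoC (h b))) n *
                 CsumI m (fun c0 => S b c0 * g c0 (sg y)))%C).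
  pose (B := fun y => CsumI m (fun c0 => S 0%nat c0 * g c0 (wy y))%C).
  pose (Ainf := CsumI m (fun b => S 0%nat b * Cpow (e2pii (RtoC (h b))) n * S b 0%nat)%C).
  pose (r1 := fun x => (g 0%nat (Ci * RtoC x + RtoC (/ INR n)) * / g 0%nat (Ci * RtoC x))%C).
  pose (W := e2pii (RtoC (- (2 / INR n + INR n) * (c / 24)))).
  pose (P := fun y => exp (-(2*PI*((c/24)*(/y - /(INR n * INR n * y)))))).
  pose (Rf := fun p : R * R => (r1 (fst p) * (A (snd p) * / B (snd p)))%C).
  assert (Hsgfar : forall M, at_right 0 (fun y => M < Im (sg y))).
  { intro M. eapply filter_imp; [|apply (inv_at_right (INR n * INR n) ltac:(apply Rmult_lt_0_compat; auto) M)].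
    intros y Hy. unfold sg. simpl. replace (0 + (0 * 0 + 1 * / (INR n * INR n * y))) with (/ (INR n * INR n * y)) by ring.
    exact Hy. }
  assert (Hwfar : forall M, at_right 0 (fun y => M < Im (wy y))).
  { intro M. eapply filter_imp; [|apply (inv_at_right 1 Rlt_0_1 M)].
    intros y Hy. unfold wy. simpl. cbv beta in Hy. rewrite Rmult_1_l in Hy. lra. }
  assert (HA : filterlim A (at_right 0) (locally Ainf)).
  { unfold A, Ainf.
    apply (fsum_lim (at_right 0) (seq 0 m) (fun b y => S 0%nat b * Cpow (e2pii (RtoC (h b))) n *
                 CsumI m (fun c0 => S b c0 * g c0 (sg y)))%C).
    intros b Hb. apply (lim_mult (at_right 0)). apply filterlim_const.
    rewrite <- (fsum_delta m (S b)) by auto.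
    apply (fsum_lim (at_right 0) (seq 0 m) (fun c0 y => S b c0 * g c0 (sg y))%C).
    intros c0 Hc0. apply (lim_mult (at_right 0)). apply filterlim_const.
    apply (Hg c0 (Hin c0 Hc0) _ (at_right 0) _ sg Hsgfar). }
  assert (HB : filterlim B (at_right 0) (locally (S 0%nat 0%nat))).
  { unfold B. rewrite <- (fsum_delta m (S 0%nat)) by auto.
    apply (fsum_lim (at_right 0) (seq 0 m) (fun c0 y => S 0%nat c0 * g c0 (wy y))%C).
    intros c0 Hc0. apply (lim_mult (at_right 0)). apply filterlim_const.
    apply (Hg c0 (Hin c0 Hc0) _ (at_right 0) _ wy Hwfar). }
  assert (Hr1 : filterlim r1 (Rbar_locally p_infty) (locally (RtoC 1 * / RtoC 1)%C)).
  { unfold r1. apply (lim_mult (Rbar_locally p_infty)).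
    - apply (Hg 0%nat Hm _ _ _ (fun x => Ci * RtoC x + RtoC (/ INR n))%C (far_p_infty _)).
    - apply (lim_inv (Rbar_locally p_infty)).
      + apply (Hg 0%nat Hm _ _ _ (fun x => Ci * RtoC x)%C far_p_infty').
      + apply RtoC0_neq; lra. }
  destruct (HS 0%nat Hm) as [HS00 _].
  assert (HBne : S 0%nat 0%nat <> RtoC 0).
  { rewrite HS00. apply RtoC0_neq. apply Rgt_not_eq. apply Rdiv_lt_0_compat; auto. }
  pose (L := ((RtoC 1 * / RtoC 1) * (Ainf * / S 0%nat 0%nat))%C).
  assert (HAinf : Ainf = (Z * RtoC (/ (sD * sD)))%C).
  { unfold Ainf, Z. rewrite !CsumI_fsum.
    rewrite (Cmult_comm _ (RtoC _)), <- fsum_scal. apply fsum_ext. intros b Hb.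
    destruct (HS b (Hin b Hb)) as [H1 H2]. rewrite H1, H2.
    destruct (Cpow (e2pii (RtoC (h b))) n) as [u v]. ceq; field; lra. }
  assert (HL : L = (Z * RtoC ((/ (sD * sD)) / (d 0%nat / sD)))%C).
  { unfold L. rewrite HAinf, HS00. rewrite (RtoC_div (/ (sD * sD))).
    field. all: try apply RtoC0_neq; apply Rgt_not_eq; apply Rdiv_lt_0_compat; auto. }
  assert (Hk : 0 < (/ (sD * sD)) / (d 0%nat / sD)).
  { apply Rdiv_lt_0_compat. apply Rinv_0_lt_compat, Rmult_lt_0_compat; auto.
    apply Rdiv_lt_0_compat; auto. }
  assert (HLne : L <> RtoC 0).
  { rewrite HL. apply Cmult_neq0; auto. apply RtoC0_neq; lra. }
  assert (HRf : filterlim Rf (filter_prod (Rbar_locally p_infty) (at_right 0)) (locally L)).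
  { unfold Rf, L. apply (lim_mult (filter_prod (Rbar_locally p_infty) (at_right 0))).
    - apply (filterlim_comp _ _ _ fst r1 _ (Rbar_locally p_infty)). apply filterlim_fst. exact Hr1.
    - apply (filterlim_comp _ _ _ snd (fun y => (A y * / B y)%C) _ (at_right 0)). apply filterlim_snd.
      apply (lim_mult (at_right 0)). exact HA. apply (lim_inv (at_right 0)); auto. }
  assert (Hid : forall x y, 0 < x -> 0 < y -> g 0%nat (Ci * RtoC x)%C <> RtoC 0 -> B y <> RtoC 0 ->
     T1 (chi 0%nat) n x y = (W * RtoC (P y) * Rf (x, y))%C).
  { intros x y Hx Hy Hgx HBy. unfold T1.
    set (tau := (Ci * RtoC y - RtoC (/ INR n))%C).
    assert (Hnny : 0 < INR n * INR n * y) by (repeat apply Rmult_lt_0_compat; auto).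
    assert (Hsgpos : 0 < Im (sg y)).
    { unfold sg; simpl. replace (0 + (0 * 0 + 1 * / (INR n * INR n * y))) with (/ (INR n * INR n * y)) by ring.
      apply Rinv_0_lt_compat; auto. }
    assert (Hmsg : 0 < Im (- / sg y)%C) by (apply Im_oppinv; auto).
    set (t1 := (- / sg y + RtoC (INR n))%C).
    assert (Ht1 : 0 < Im t1).
    { replace (Im t1) with (Im (- / sg y)%C) by (unfold t1; simpl; ring). auto. }
    assert (Htau : tau = (- / t1)%C).
    { unfold t1, sg, tau. rewrite E1 by auto. rewrite oppinv_inv. reflexivity.
      apply Im_pos_neq0. simpl. lra. }
    assert (Hc : chi 0%nat tau = (e2pii (sg y * RtoC (- (c/24))) * e2pii (RtoC (INR n * (- (c/24)))) * A y)%C).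
    { rewrite Htau, HmodS by auto. unfold A. rewrite !CsumI_fsum, <- fsum_scal. apply fsum_ext. intros b Hb.
      unfold t1. rewrite (chi_shift chi h c m HmodT b) by auto.
      rewrite HmodS by auto. rewrite !CsumI_fsum.
      rewrite (fsum_ext _ (fun c0 => S b c0 * chi c0 (sg y))%C
                 (fun c0 => e2pii (sg y * RtoC (- (c/24))) * (S b c0 * g c0 (sg y)))%C).
      2: { intros c0 _. rewrite Hsplit. ring. }
      rewrite fsum_scal. rewrite !Cpow_e2pii.
      assert (Epow : e2pii (RtoC (h b - c / 24) * RtoC (INR n)) =
          (e2pii (RtoC (h b) * RtoC (INR n)) * e2pii (RtoC (INR n * - (c / 24))))%C).
      { rewrite <- e2pii_plus. f_equal. ceq; ring. }
      rewrite Epow. ring. }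
    assert (Hd : chi 0%nat (Ci * RtoC y)%C = (e2pii (wy y * RtoC (- (c/24))) * B y)%C).
    { rewrite (E2 y Hy). rewrite HmodS; auto. 2: { simpl. replace (0 * / y + 1 * 0) with 0 by ring.
        replace (0 * 0 + 1 * / y) with (/ y) by ring. apply Rinv_0_lt_compat; auto. }
      unfold B. rewrite !CsumI_fsum, <- fsum_scal. apply fsum_ext. intros c0 _.
      rewrite Hsplit. unfold wy. ring. }
    rewrite Hc, Hd, (Hsplit 0%nat (Ci * RtoC x + RtoC (/ INR n))%C), (Hsplit 0%nat (Ci * RtoC x)%C).
    unfold Rf, r1. cbn [fst snd].
    assert (Hrel : (e2pii ((Ci * RtoC x + RtoC (/ INR n)) * RtoC (- (c / 24))) *
        e2pii (sg y * RtoC (- (c / 24))) * e2pii (RtoC (INR n * - (c / 24))))%C =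
        (W * RtoC (P y) * e2pii (Ci * RtoC x * RtoC (- (c / 24))) * e2pii (wy y * RtoC (- (c / 24))))%C).
    { unfold P, W. rewrite <- e2pii_imag. rewrite <- !e2pii_plus. f_equal. unfold sg, wy.
      ceq; field; repeat split; lra. }
    pose proof (e2pii_neq0 (Ci * RtoC x * RtoC (- (c / 24)))%C).
    pose proof (e2pii_neq0 (wy y * RtoC (- (c / 24)))%C).
    transitivity ((g 0%nat (Ci * RtoC x + RtoC (/ INR n))%C * A y) *
       (e2pii ((Ci * RtoC x + RtoC (/ INR n)) * RtoC (- (c / 24))) *
        e2pii (sg y * RtoC (- (c / 24))) * e2pii (RtoC (INR n * - (c / 24)))) /
       (g 0%nat (Ci * RtoC x)%C * B y * (e2pii (Ci * RtoC x * RtoC (- (c / 24))) * e2pii (wy y * RtoC (- (c / 24))))))%C.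
    { field. repeat split; auto. }
    rewrite Hrel. field. repeat split; auto. }
  assert (HW : W <> RtoC 0) by apply e2pii_neq0.
  assert (HCW : Cmod W = 1).
  { unfold W. rewrite Cmod_e2pii. simpl Im. replace (-(2*PI*0)) with 0 by ring. apply exp_0. }
  assert (Hev : filter_prod (Rbar_locally p_infty) (at_right 0) (fun p => (0 < fst p /\
      g 0%nat (Ci * RtoC (fst p))%C <> RtoC 0) /\ (0 < snd p /\ B (snd p) <> RtoC 0))).
  { apply (Filter_prod _ _ _ (fun x => 0 < x /\ g 0%nat (Ci * RtoC x)%C <> RtoC 0)
                             (fun y => 0 < y /\ B y <> RtoC 0)).
    - apply filter_and. apply pos_p_infty.
      apply (lim_neq0 (Rbar_locally p_infty) (fun x => g 0%nat (Ci * RtoC x)%C) (RtoC 1)).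
      apply (Hg 0%nat Hm _ _ _ (fun x => Ci * RtoC x)%C far_p_infty').
      apply RtoC0_neq; lra.
    - apply filter_and. apply pos_at_right. apply (lim_neq0 (at_right 0) B _ HB HBne).
    - intros x y Hx Hy. simpl. tauto. }
  assert (Hev2 := filter_and _ _ Hev (lim_neq0 _ Rf L HRf HLne)).
  split.
  - eapply filter_imp; [|exact Hev2]. intros [x y] [[[Hx Hgx] [Hy HBy]] HR]. simpl in *.
    rewrite Hid by auto. apply Cmult_neq0; [apply Cmult_neq0|]; auto.
    apply RtoC0_neq. apply Rgt_not_eq, exp_pos.
  - apply (filterlim_ext_loc (fun p => (W * (Rf p / RtoC (Cmod (Rf p))))%C)).
    + eapply filter_imp; [|exact Hev2]. intros [x y] [[[Hx Hgx] [Hy HBy]] HR]. simpl in *.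
      rewrite Hid by auto. rewrite !Cmod_mult, HCW, Cmod_R, Rabs_pos_eq by (left; apply exp_pos).
      rewrite Rmult_1_l, RtoC_mult.
      assert (RtoC (P y) <> RtoC 0) by (apply RtoC0_neq; apply Rgt_not_eq, exp_pos).
      assert (RtoC (Cmod (Rf (x, y))) <> RtoC 0).
      { apply RtoC0_neq. apply Rgt_not_eq. apply Cmod_gt_0. auto. }
      field. repeat split; auto.
    + replace (Z / RtoC (Cmod Z))%C with (L / RtoC (Cmod L))%C.
      2: { rewrite HL. apply normalize_scale; auto. }
      change (e2pii (RtoC (- (2 / INR n + INR n) * (c / 24)))) with W.
      apply (lim_mult (filter_prod (Rbar_locally p_infty) (at_right 0))). apply filterlim_const.
      apply (lim_mult (filter_prod (Rbar_locally p_infty) (at_right 0))). exact HRf.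
      apply (lim_inv (filter_prod (Rbar_locally p_infty) (at_right 0))).
      apply (lim_RtoC (filter_prod (Rbar_locally p_infty) (at_right 0))).
      apply (lim_Cmod (filter_prod (Rbar_locally p_infty) (at_right 0))). exact HRf.
      apply RtoC0_neq. apply Rgt_not_eq. apply Cmod_gt_0. auto.
Qed.
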